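(* Consider a one-red TAP instance with $n$ blue features, and let $\mathrm{OPT}_{SC}$ be the smallest number of red features appearing in a set of exemplars in which all blue features appear. Let $K=\lceil \tfrac12(n-\mathrm{OPT}_{SC})\rceil$. Then GREEDY covers at least $2K$ blue features in its first $K$ moves (iterations).
   Context: Target Approximation Problem (TAP): the input is a groundset $U$ of features, a target $T\subseteq U$, and a collection $S$ of exemplars, each a subset of $U$. Features in $U\cap T$ are blue, features in $U\setminus T$ are red. A feature appears in $S'\subseteq S$ if it lies in $\bigcup_{E\in S'}E$. It is assumed that every feature appears in at least one exemplar and that $T$ and all exemplars are nonempty. An instance is one-red if every exemplar contains exactly one red feature. A red feature $r$ covers a blue feature $b$ if some exemplar contains both. GREEDY: until every blue feature is covered, repeatedly choose the red feature that covers the largest number of not-yet-covered blue features (ties broken arbitrarily); each such choice is one move, and the blue features covered by that move are the previously uncovered blue features covered by the chosen red feature. *)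

(* Defs.v *)
From mathcomp Require Import all_boot.
Set Implicit Arguments. Unset Strict Implicit. Unset Printing Implicit Defensive.

(* TAP instance: groundset = finite type U, target T : {set U},
   exemplars S : {set {set U}}.  Blue = in T, red = not in T. *)

Definition tap_wf (U : finType) (T : {set U}) (S : {set {set U}}) : Prop :=
  [/\ forall u : U, exists2 E, E \in S & u \in E,
      T != set0 &
      forall E, E \in S -> E != set0].

Definition one_red (U : finType) (T : {set U}) (S : {set {set U}}) : Prop :=
  forall E, E \in S -> #|E :\: T| = 1.

Definition covers (U : finType) (S : {set {set U}}) (r b : U) : bool :=
  [exists E in S, (r \in E) && (b \in E)].

(* OPT_SC: smallest number of red features appearing in a set of exemplars
   S' ⊆ S in which all blue features appear.  (S itself is feasible and every
   cost is <= #|U|, so #|U| is a harmless initial value for the min.) *)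
Definition opt_sc (U : finType) (T : {set U}) (S : {set {set U}}) : nat :=
  \big[minn/#|U|]_(S' in powerset S | T \subset cover S') #|cover S' :\: T|.

Definition covered (U : finType) (T : {set U}) (S : {set {set U}})
  (rs : seq U) : {set U} :=
  [set b in T | has (fun r => covers S r b) rs].

Definition gain (U : finType) (T : {set U}) (S : {set {set U}})
  (rs : seq U) (r : U) : nat :=
  #|[set b in T | covers S r b & b \notin covered T S rs]|.

Definition greedy_run (U : finType) (T : {set U}) (S : {set {set U}})
  (rs : seq U) : Prop :=
  [/\ forall (pre : seq U) (r : U) (post : seq U), rs = pre ++ r :: post ->
        [/\ covered T S pre != T,
            r \notin T &
            forall r', r' \notin T -> gain T S pre r' <= gain T S pre r]
    & covered T S rs = T].

(* Main.v *)
Require Import Defs.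
From mathcomp Require Import all_boot.
From mathcomp Require Import zify.

Lemma card_bigcup_le (U I : finType) (A : {set I}) (F : I -> {set U}) :
  #|\bigcup_(i in A) F i| <= \sum_(i in A) #|F i|.
Proof.
elim/big_rec2: _ => [|i n X hi h]; first by rewrite cards0.
rewrite cardsU; apply: leq_trans (leq_subr _ _) _; exact: leq_add.
Qed.

Lemma opt_witness (U : finType) (T : {set U}) (S : {set {set U}}) :
  opt_sc T S < #|U| ->
  exists S' : {set {set U}}, [/\ S' \subset S, T \subset cover S' & #|cover S' :\: T| = opt_sc T S].
Proof.
rewrite /opt_sc.
set P := (fun v => v = #|U| \/ exists S' : {set {set U}}, [/\ S' \subset S, T \subset cover S' & #|cover S' :\: T| = v]).
have : P (\big[minn/#|U|]_(S' in powerset S | T \subset cover S') #|cover S' :\: T|).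
  apply: big_ind.
  - by left.
  - move=> x y hx hy; rewrite /minn; by case: ltnP.
  - move=> S' /andP [h1 h2]; right; exists S'; split => //.
    by rewrite inE in h1.
case=> [->|//]; by rewrite ltnn.
Qed.

Lemma covered_sub (U : finType) (T : {set U}) (S : {set {set U}}) rs :
  covered T S rs \subset T.
Proof. by apply/subsetP => b; rewrite inE => /andP []. Qed.

Lemma covered_rcons (U : finType) (T : {set U}) (S : {set {set U}}) pre r :
  #|covered T S (rcons pre r)| = #|covered T S pre| + gain T S pre r.
Proof.
rewrite /gain -(cardsID (covered T S pre) (covered T S (rcons pre r))).
have e1 : covered T S (rcons pre r) :&: covered T S pre = covered T S pre.
  apply/setP => b; rewrite !inE has_rcons.
  by case: (b \in T); case: (has _ pre); rewrite ?orbT ?andbF.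
have e2 : covered T S (rcons pre r) :\: covered T S pre =
  [set b in T | covers S r b & b \notin covered T S pre].
  apply/setP => b; rewrite !inE has_rcons.
  by case: (b \in T); case: (has _ pre); case: (covers S r b).
by rewrite e1 e2.
Qed.

Lemma uncovered_bound (U : finType) (T : {set U}) (S : {set {set U}}) (S' : {set {set U}}) (pre : seq U) (g : nat) :
  one_red T S -> S' \subset S -> T \subset cover S' ->
  (forall r, r \notin T -> gain T S pre r <= g) ->
  #|T| - #|covered T S pre| <= #|cover S' :\: T| * g.
Proof.
move=> h1 hS hT hg.
rewrite -(cardsDS (covered_sub _ T S pre)) -sum_nat_const.
set G := fun r => [set b in T | covers S r b & b \notin covered T S pre].
apply: (@leq_trans (\sum_(r in cover S' :\: T) #|G r|)); last first.
  apply: leq_sum => r; rewrite inE => /andP [hr _]; exact: hg.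
apply: leq_trans _ (card_bigcup_le _ _ (cover S' :\: T) G); apply: subset_leq_card.
apply/subsetP => b; rewrite inE => /andP [hnc hbT].
have := subsetP hT b hbT; case/bigcupP => E hE hbE.
have ES : E \in S by exact: subsetP hS E hE.
have := h1 E ES; move/eqP/cards1P => [r hEr].
have hr : r \in E :\: T by rewrite hEr set11.
move: (hr); rewrite inE => /andP [hrT hrE].
apply/bigcupP; exists r.
  by rewrite inE hrT /=; apply/bigcupP; exists E.
rewrite /G inE hbT hnc andbT /covers; apply/existsP; exists E.
by rewrite ES hrE hbE.
Qed.

Theorem lemma14 (U : finType) (T : {set U}) (S : {set {set U}}) (rs : seq U) :
  tap_wf T S -> one_red T S -> greedy_run T S rs ->
  let n := #|T| in
  let K := (n - opt_sc T S).+1 %/ 2 in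
  2 * K <= #|covered T S (take K rs)|.
Proof.
move=> hwf h1 [hg hall]; cbv zeta; set n := #|T|; set K := _ %/ 2.
have K2 : 2 * K <= (n - opt_sc T S).+1 by rewrite /K; lia.
have [K0|Kpos] := posnP K; first by rewrite K0.
have optn : opt_sc T S < n by lia.
have nU : n <= #|U| by rewrite /n; apply: max_card.
have [S' [hS hT hopt]] := opt_witness _ _ _ (leq_trans optn nU).
have opt1 : 0 < opt_sc T S.
  case: hwf => _ hT0 _.
  case/set0Pn: hT0 => b hb.
  have := subsetP hT b hb; case/bigcupP => E hE hbE.
  have ES : E \in S by exact: subsetP hS E hE.
  have := h1 E ES; move/eqP/cards1P => [r hEr].
  have hr : r \in E :\: T by rewrite hEr set11.
  move: hr; rewrite inE => /andP [hrT hrE].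
  rewrite -hopt; apply/card_gt0P; exists r; rewrite inE hrT /=.
  by apply/bigcupP; exists E.
have [hs|hs] := leqP (size rs) K.
  by rewrite take_oversize // hall; lia.
have inv : forall i, i <= K ->
  2 * i <= #|covered T S (take i rs)| \/
  (n - opt_sc T S) + 1 + i <= #|covered T S (take i rs)| + K.
  elim=> [|i IH] hi; first by left.
  have hi' : i < size rs by lia.
  have x0 : U by case: rs hs {hg hall IH hi'} => // x.
  rewrite (take_nth x0 hi') covered_rcons.
  have := hg (take i rs) (nth x0 rs i) (drop i.+1 rs).
  rewrite -cat_rcons -take_nth // cat_take_drop => /(_ erefl) [hne hrT hmax].
  set g := gain T S (take i rs) (nth x0 rs i).
  have cs := subset_leq_card (covered_sub _ T S (take i rs)).
  have [g2|g1] := leqP 2 g.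
    move: (IH (ltnW hi)); lia.
  have ub := uncovered_bound _ _ _ _ (take i rs) _ h1 hS hT hmax.
  rewrite hopt -/g -/n in ub.
  have g0 : 0 < g.
    rewrite lt0n; apply/negP => /eqP g0; rewrite g0 muln0 in ub.
    have eqc : covered T S (take i rs) = T.
      apply/eqP; rewrite eqEcard covered_sub /=; lia.
    by rewrite eqc eqxx in hne.
  have ge : g = 1 by lia.
  rewrite ge muln1 in ub; rewrite ge -/n; right; lia.
case: (inv K (leqnn K)); lia.
Qed.
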